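(* Let $\rho$ be a finitary type. The class of all $\rho$-dimensional t-algebras equals $\mathrm{Mod}(\mathrm{Str}(\rho))$ and is an Et-variety of type $\rho^\star$.
   Context: $\mathbb N=\{1,2,\dots\}$. A thread on $A$ is $s\in A^{\mathbb N}$; $r[a_1,\dots,a_n]$ is the thread with entries $a_i$ for $i\le n$ and $r_i$ for $i>n$; $r\equiv_{\mathbb N}s$ iff $\{i:r_i\neq s_i\}$ is finite, $[s]_{\mathbb N}$ its class. A trace on $A$ is a nonempty union of $\equiv_{\mathbb N}$-classes. A t-algebra of type $\tau$ and trace $\mathsf a$ is $(A,\mathsf a,\sigma^{\mathbf A})_{\sigma\in\tau}$ with $\sigma^{\mathbf A}:\mathsf a\to A$ arbitrary. t-subalgebra: $(B,\mathsf b,\sigma^{\mathbf A}|_{\mathsf b})$ with $B\subseteq A$, $\mathsf b\subseteq\mathsf a$ a trace on $B$, $\sigma^{\mathbf A}(\mathsf b)\subseteq B$. t-homomorphism: $f:A\to B$ with $f^{\mathbb N}(\mathsf a)\subseteq\mathsf b$ (coordinatewise) and $f\circ\sigma^{\mathbf A}=\sigma^{\mathbf B}\circ f^{\mathbb N}$; onto if $f$ and $f^{\mathbb N}:\mathsf a\to\mathsf b$ are surjective. t-product: universe $\prod_jA_j$, trace $\prod_j\mathsf a_j$ (with $(s^j)_j$ identified with the thread of entries $(s^j_k)_j$), operations componentwise. t-variety: closed under t-homomorphic images, t-subalgebras, t-products. $\tau$-terms: least set containing $\mathsf e_1,\mathsf e_2,\dots$ and $\sigma(t_1,\dots,t_n,\mathsf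 e_{n+1},\dots)$; term operations $\mathsf e_i^{\mathbf A}(s)=s_i$, $\sigma(t_1,\dots,t_n,\mathsf e_{n+1},\dots)^{\mathbf A}(s)=\sigma^{\mathbf A}(s[t_1^{\mathbf A}(s),\dots,t_n^{\mathbf A}(s)])$; $\theta_{\mathbf A}=\{(t,u):t^{\mathbf A}=u^{\mathbf A}\}$; $\mathrm{Mod}(\Sigma)=\{\mathbf A:\Sigma\subseteq\theta_{\mathbf A}\}$. $\mathbf A_{\bar s}$: universe $A_{\bar s}=\{t^{\mathbf A}(s)\}$, trace $[s]_{\mathbb N}\cap(A_{\bar s})^{\mathbb N}$. An Et-variety is a t-variety $K$ such that $\mathbf A_{\bar s}\in K$ for all $s$ in the trace of $\mathbf A$ implies $\mathbf A\in K$. A finitary type is $\rho=(\rho_n)_{n\ge0}$, disjoint sets of $n$-ary symbols; $\rho^\star=\bigcup_n\rho_n$, regarded as a type of t-algebras. A t-algebra $\mathbf A$ of type $\rho^\star$ and trace $\mathsf a$ is $\rho$-dimensional if for every $\sigma\in\rho_n$ and all $s,u\in\mathsf a$ with $s\equiv_{\mathbb N}u$ and $s_i=u_i$ for all $i\le n$, $\sigma^{\mathbf A}(s)=\sigma^{\mathbf A}(u)$. Let $F_\rho(I)$ be the $\rho$-terms over variables $I=\{v_1,v_2,\dots\}$. Define $(-)^\star:F_\rho(I)\to T_{\rho^\star}$ by $v_i^\star=\mathsf e_i$, $\sigma(p_1,\dots,p_n)^\star=\sigma(p_1^\star,\dots,p_n^\star,\mathsf e_{n+1},\mathsf e_{n+2},\dots)$,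 and $(-)^\bullet:T_{\rho^\star}\to F_\rho(I)$ by $\mathsf e_i^\bullet=v_i$ and, for $\sigma\in\rho_n$ and $t=\sigma(t_1,\dots,t_k,\mathsf e_{k+1},\dots)$: $t^\bullet=\sigma(t_1^\bullet,\dots,t_k^\bullet,v_{k+1},\dots,v_n)$ if $k\le n$, and $t^\bullet=\sigma(t_1^\bullet,\dots,t_n^\bullet)$ if $k>n$. $\mathrm{Str}(\rho)$ is the set of $\rho^\star$-identities $((t^\bullet)^\star,t)$ for $t\in T_{\rho^\star}$ not in the image of $(-)^\star$. *)

(* Defs.v *)
(* Threads are indexed from 0: the Rocq thread s : nat -> A has
   s 0 = s_1, s 1 = s_2, ...; likewise Var i denotes e_(i+1), FVar i denotes v_(i+1). *)
From Stdlib Require Import List Arith Lia FunctionalExtensionality ProofIrrelevance.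
From Stdlib Require Import ClassicalEpsilon.
Import ListNotations.
Set Implicit Arguments.

Definition eqN {A : Type} (r s : nat -> A) : Prop :=
  exists n, forall i, n <= i -> r i = s i.

Definition is_trace {A : Type} (a : (nat -> A) -> Prop) : Prop :=
  (exists s, a s) /\ (forall r s, a s -> eqN r s -> a r).

Record talg (tau : Type) := TAlg {
  car : Type;
  tr : (nat -> car) -> Prop;
  tr_trace : is_trace tr;
  op : tau -> forall s : nat -> car, tr s -> car }.

Definition upd {A : Type} (s : nat -> A) (l : list A) : nat -> A :=
  fun i => nth i l (s i).

Lemma upd_eqN {A : Type} (s : nat -> A) (l : list A) : eqN (upd s l) s.
Proof. exists (length l); intros i Hi; unfold upd; apply nth_overflow; lia. Qed.

Lemma upd_tr {tau : Type} (A : talg tau) (s : nat -> car A) (l : list (car A)) :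
  tr A s -> tr A (upd s l).
Proof. intro H; exact (proj2 (tr_trace A) _ _ H (upd_eqN s l)). Qed.

(* tau-terms: Var i = e_(i+1); App f [t1;..;tn] = f(t1,...,tn,e_(n+1),...) *)
Inductive term (tau : Type) : Type :=
| Var : nat -> term tau
| App : tau -> list (term tau) -> term tau.

Fixpoint teval {tau : Type} (A : talg tau) (t : term tau) (s : nat -> car A)
  (H : tr A s) {struct t} : car A :=
  match t with
  | Var _ i => s i
  | App f ts =>
      op A f (upd s (map (fun u => teval A u s H) ts))
        (@upd_tr _ A s (map (fun u => teval A u s H) ts) H)
  end.

Definition satisfies {tau : Type} (A : talg tau) (p : term tau * term tau) : Prop :=
  forall s (H : tr A s), teval A (fst p) s H = teval A (snd p) s H.

Definition Mod {tau : Type} (Sigma : term tau * term tau -> Prop) (A : talg tau) : Prop :=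
  forall p, Sigma p -> satisfies A p.

Definition thom {tau : Type} (A B : talg tau) (f : car A -> car B) : Prop :=
  exists Hf : (forall s, tr A s -> tr B (fun i => f (s i))),
    forall g s (H : tr A s), f (op A g s H) = op B g (fun i => f (s i)) (Hf s H).

Definition onto_thom {tau : Type} (A B : talg tau) (f : car A -> car B) : Prop :=
  thom A B f /\ (forall y, exists x, f x = y) /\
  (forall t, tr B t -> exists s, tr A s /\ (fun i => f (s i)) = t).

Definition subalg {tau : Type} (A : talg tau) (P : car A -> Prop)
  (b : (nat -> {x | P x}) -> Prop) (btr : is_trace b)
  (bsub : forall s, b s -> tr A (fun i => proj1_sig (s i)))
  (bop : forall g s (H : b s), P (op A g (fun i => proj1_sig (s i)) (bsub s H)))
  : talg tau :=
  {| car := {x | P x}; tr := b; tr_trace := btr;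
     op := fun g s H => exist _ (op A g (fun i => proj1_sig (s i)) (bsub s H)) (bop g s H) |}.

Definition prod_tr {tau J : Type} (A : J -> talg tau) (s : nat -> forall j, car (A j)) : Prop :=
  forall j, tr (A j) (fun i => s i j).

Lemma prod_tr_trace {tau J : Type} (A : J -> talg tau) : is_trace (prod_tr A).
Proof.
  split.
  - exists (fun i j => proj1_sig (constructive_indefinite_description _
                                     (proj1 (tr_trace (A j)))) i).
    intro j. exact (proj2_sig (constructive_indefinite_description _
                                  (proj1 (tr_trace (A j))))).
  - intros r s Hs [n Hn] j.
    apply (proj2 (tr_trace (A j))) with (s := fun i => s i j); [apply Hs|].
    exists n; intros i Hi; rewrite Hn; auto.
Qed.

Definition tprod {tau J : Type} (A : J -> talg tau) : talg tau :=
  {| car := forall j, car (A j); tr := prod_tr A; tr_trace := prod_tr_trace A;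
     op := fun g s H => fun j => op (A j) g (fun i => s i j) (H j) |}.

Definition H_closed {tau : Type} (K : talg tau -> Prop) : Prop :=
  forall (A B : talg tau) (f : car A -> car B), K A -> onto_thom A B f -> K B.

Definition S_closed {tau : Type} (K : talg tau -> Prop) : Prop :=
  forall (A : talg tau) P b btr bsub bop, K A -> K (@subalg tau A P b btr bsub bop).

Definition P_closed {tau : Type} (K : talg tau -> Prop) : Prop :=
  forall (J : Type) (A : J -> talg tau), (forall j, K (A j)) -> K (tprod A).

Definition tvariety {tau : Type} (K : talg tau -> Prop) : Prop :=
  H_closed K /\ S_closed K /\ P_closed K.

Section Abar.
Context {tau : Type} (A : talg tau) (s : nat -> car A) (H : tr A s).

Definition Abar_P (x : car A) : Prop := exists t, x = teval A t s H.

Definition Abar_tr (r : nat -> {x | Abar_P x}) : Prop :=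
  eqN (fun i => proj1_sig (r i)) s.

Lemma Abar_tr_trace : is_trace Abar_tr.
Proof.
  split.
  - exists (fun i => exist Abar_P (s i) (ex_intro _ (Var tau i) eq_refl)).
    exists 0; reflexivity.
  - intros r r' [n Hn] [m Hm]. exists (n + m); intros i Hi.
    rewrite Hm by lia. apply Hn; lia.
Qed.

Lemma Abar_sub : forall r, Abar_tr r -> tr A (fun i => proj1_sig (r i)).
Proof. intros r Hr. exact (proj2 (tr_trace A) _ _ H Hr). Qed.

Lemma op_ext (g : tau) (s1 s2 : nat -> car A) (H1 : tr A s1) (H2 : tr A s2) :
  s1 = s2 -> op A g s1 H1 = op A g s2 H2.
Proof. intros ->. f_equal. apply proof_irrelevance. Qed.

Lemma Abar_op : forall g r (Hr : Abar_tr r),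
  Abar_P (op A g (fun i => proj1_sig (r i)) (Abar_sub Hr)).
Proof.
  intros g r Hr. destruct Hr as [n Hn].
  assert (Hb : forall k, exists ts, length ts = k /\
            forall i, i < k -> teval A (nth i ts (Var tau 0)) s H = proj1_sig (r i)).
  { induction k as [|k [ts [Hl Ht]]].
    - exists []; split; [reflexivity|intros; lia].
    - destruct (proj2_sig (r k)) as [t Htk].
      exists (ts ++ [t]); split.
      + rewrite length_app; simpl; lia.
      + intros i Hi. destruct (Nat.eq_dec i k) as [->|Hne].
        * rewrite app_nth2 by lia. rewrite Hl, Nat.sub_diag. simpl. auto.
        * rewrite app_nth1 by lia. apply Ht; lia. }
  destruct (Hb n) as [ts [Hl Ht]].
  exists (App g ts). simpl. apply op_ext.
  apply functional_extensionality; intro i. unfold upd.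
  destruct (Nat.lt_ge_cases i n) as [Hi|Hi].
  - rewrite nth_indep with (d' := teval A (Var tau 0) s H)
      by (rewrite length_map; lia).
    rewrite (map_nth (fun u => teval A u s H)). symmetry; apply Ht; auto.
  - rewrite nth_overflow by (rewrite length_map; lia). apply Hn; auto.
Qed.

Definition Abar : talg tau := @subalg tau A Abar_P Abar_tr Abar_tr_trace Abar_sub Abar_op.
End Abar.

Definition Et_variety {tau : Type} (K : talg tau -> Prop) : Prop :=
  tvariety K /\
  forall A : talg tau, (forall s (H : tr A s), K (Abar A s H)) -> K A.

(* ---- finitary types rho: symbols sym with arity ar; rho^* = sym ---- *)

Definition rho_dim {sym : Type} (ar : sym -> nat) (A : talg sym) : Prop :=
  forall (g : sym) (s u : nat -> car A) (Hs : tr A s) (Hu : tr A u),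
    eqN s u -> (forall i, i < ar g -> s i = u i) -> op A g s Hs = op A g u Hu.

Inductive fterm (sym : Type) : Type :=
| FVar : nat -> fterm sym
| FApp : sym -> list (fterm sym) -> fterm sym.

Fixpoint fwf {sym : Type} (ar : sym -> nat) (p : fterm sym) : Prop :=
  match p with
  | FVar _ _ => True
  | FApp g ps => length ps = ar g /\
      (fix all (l : list (fterm sym)) : Prop :=
         match l with [] => True | q :: l' => fwf ar q /\ all l' end) ps
  end.

Fixpoint star {sym : Type} (p : fterm sym) : term sym :=
  match p with
  | FVar _ i => Var sym i
  | FApp g ps => App g (map star ps)
  end.

Fixpoint bullet {sym : Type} (ar : sym -> nat) (t : term sym) : fterm sym :=
  match t with
  | Var _ i => FVar sym i
  | App g ts => FApp g (firstn (ar g) (map (bullet ar) ts) ++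
                        map (FVar sym) (seq (length ts) (ar g - length ts)))
  end.

Definition in_star_image {sym : Type} (ar : sym -> nat) (t : term sym) : Prop :=
  exists p, fwf ar p /\ star p = t.

Definition Str {sym : Type} (ar : sym -> nat) (p : term sym * term sym) : Prop :=
  exists t, ~ in_star_image ar t /\ p = (star (bullet ar t), t).

(* Main.v *)
Require Import Defs.
From Stdlib Require Import List Arith Lia FunctionalExtensionality ProofIrrelevance.
From Stdlib Require Import ClassicalEpsilon Bool.
Open Scope bool_scope.
Import ListNotations.

Section Main.
Variable sym : Type.
Variable ar : sym -> nat.

Lemma eqN_sym {X} (r s : nat -> X) : eqN r s -> eqN s r.
Proof. intros [n Hn]; exists n; intros; symmetry; auto. Qed.

Lemma eqN_trans {X} (r s t : nat -> X) : eqN r s -> eqN s t -> eqN r t.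
Proof. intros [n Hn] [m Hm]; exists (n + m); intros i Hi; rewrite Hn, Hm; auto; lia. Qed.

Lemma op_irr {tau} (A : talg tau) g s1 s2 (H1 : tr A s1) (H2 : tr A s2) :
  s1 = s2 -> op A g s1 H1 = op A g s2 H2.
Proof. intros ->; f_equal; apply proof_irrelevance. Qed.

Lemma sig_ext {X} {P : X -> Prop} (a b : {x | P x}) : proj1_sig a = proj1_sig b -> a = b.
Proof. destruct a, b; simpl; intros ->; f_equal; apply proof_irrelevance. Qed.

Lemma nth_map_lt {X Y} (f : X -> Y) l i d d0 :
  i < length l -> nth i (map f l) d = f (nth i l d0).
Proof. intros. rewrite nth_indep with (d' := f d0) by (rewrite length_map; lia). apply map_nth. Qed.

Fixpoint term_ind' (P : term sym -> Prop) (HV : forall i, P (Var sym i))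
  (HA : forall g ts, Forall P ts -> P (App g ts)) (t : term sym) : P t :=
  match t with
  | Var _ i => HV i
  | App g ts => HA g ts ((fix F l := match l return Forall P l with
                     | [] => Forall_nil _
                     | u :: l' => Forall_cons _ (term_ind' P HV HA u) (F l') end) ts)
  end.

Lemma star_bullet_eval (A : talg sym) (HA : rho_dim ar A) :
  forall t x (H : tr A x), teval A (star (bullet ar t)) x H = teval A t x H.
Proof.
  intro t; induction t as [i|g ts IH] using term_ind'; intros x H; [reflexivity|].
  cbn [star bullet teval].
  apply HA.
  - eapply eqN_trans; [apply upd_eqN| apply eqN_sym, upd_eqN].
  - intros i Hi. unfold upd.
    rewrite firstn_map, !map_app, !map_map.
    destruct (Nat.lt_ge_cases i (length ts)) as [Hl|Hl].
    + rewrite app_nth1 by (rewrite length_map, length_firstn; lia).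
      rewrite nth_map_lt with (d0 := Var sym 0) by (rewrite length_firstn; lia).
      rewrite nth_map_lt with (d0 := Var sym 0) by lia.
      rewrite nth_firstn. replace (i <? ar g) with true by (symmetry; apply Nat.ltb_lt; lia).
      rewrite Forall_forall in IH. apply IH. apply nth_In; lia.
    + rewrite app_nth2 by (rewrite length_map, length_firstn; lia).
      rewrite length_map, length_firstn.
      replace (Init.Nat.min (ar g) (length ts)) with (length ts) by lia.
      rewrite nth_map_lt with (d0 := 0) by (rewrite length_seq; lia).
      rewrite seq_nth by lia. cbn [star teval].
      rewrite nth_overflow by (rewrite length_map; lia).
      f_equal; lia.
Qed.

Definition zz {X} (g : sym) (x : nat -> X) (M K : nat) : nat -> X :=
  fun i => if (ar g <=? i) && (i <? K) then x M else x i.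

Lemma zz_eqN {X} g (x : nat -> X) M K : eqN (zz g x M K) x.
Proof. exists K; intros i Hi; unfold zz. replace (i <? K) with false by (symmetry; apply Nat.ltb_ge; lia).
  rewrite andb_false_r; reflexivity. Qed.

Definition zprop (A : talg sym) : Prop :=
  forall g x (Hx : tr A x) M K (Hz : tr A (zz g x M K)), ar g < K ->
    op A g x Hx = op A g (zz g x M K) Hz.

Lemma dim_of_z (A : talg sym) : zprop A -> rho_dim ar A.
Proof.
  intros P g s u Hs Hu [n Hn] Hlt.
  assert (Hzs : tr A (zz g s n (n + ar g + 1))) by
    (apply (proj2 (tr_trace A)) with (s := s); [exact Hs| apply zz_eqN]).
  assert (Hzu : tr A (zz g u n (n + ar g + 1))) by
    (apply (proj2 (tr_trace A)) with (s := u); [exact Hu| apply zz_eqN]).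
  rewrite (P g s Hs n _ Hzs) by lia. rewrite (P g u Hu n _ Hzu) by lia.
  apply op_irr. apply functional_extensionality; intro i; unfold zz.
  destruct (ar g <=? i) eqn:E1; destruct (i <? n + ar g + 1) eqn:E2; simpl.
  - apply Hn; lia.
  - apply Nat.ltb_ge in E2; apply Hn; lia.
  - apply Nat.leb_gt in E1; apply Hlt; lia.
  - apply Nat.leb_gt in E1; apply Hlt; lia.
Qed.

Lemma upd_zz {X} g (x : nat -> X) M K : ar g <= K ->
  upd x (map x (seq 0 (ar g)) ++ repeat (x M) (K - ar g)) = zz g x M K.
Proof.
  intro HK. apply functional_extensionality; intro i; unfold upd, zz.
  destruct (Nat.lt_ge_cases i (ar g)) as [H1|H1].
  - rewrite app_nth1 by (rewrite length_map, length_seq; lia).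
    rewrite nth_map_lt with (d0 := 0) by (rewrite length_seq; lia).
    rewrite seq_nth by lia. replace (ar g <=? i) with false by (symmetry; apply Nat.leb_gt; lia).
    reflexivity.
  - rewrite app_nth2 by (rewrite length_map, length_seq; lia).
    rewrite length_map, length_seq.
    replace (ar g <=? i) with true by (symmetry; apply Nat.leb_le; lia). simpl.
    destruct (Nat.lt_ge_cases i K) as [H2|H2].
    + replace (i <? K) with true by (symmetry; apply Nat.ltb_lt; lia).
      apply nth_repeat_lt; lia.
    + replace (i <? K) with false by (symmetry; apply Nat.ltb_ge; lia).
      apply nth_overflow. rewrite repeat_length; lia.
Qed.

Lemma upd_self {X} (x : nat -> X) n : upd x (map x (seq 0 n)) = x.
Proof.
  apply functional_extensionality; intro i; unfold upd.
  destruct (Nat.lt_ge_cases i n) as [H1|H1].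
  - rewrite nth_map_lt with (d0 := 0) by (rewrite length_seq; lia).
    rewrite seq_nth by lia. reflexivity.
  - apply nth_overflow. rewrite length_map, length_seq; lia.
Qed.

Lemma mod_z (A : talg sym) : Mod (Str ar) A -> zprop A.
Proof.
  intros HM g x Hx M K Hz HK.
  set (ts := map (Var sym) (seq 0 (ar g)) ++ repeat (Var sym M) (K - ar g)).
  assert (Lts : length ts = K) by
    (unfold ts; rewrite length_app, length_map, length_seq, repeat_length; lia).
  assert (Hnot : ~ in_star_image ar (App g ts)).
  { intros [p [Hwf Hst]]. destruct p as [i|g' ps]; simpl in Hst; [discriminate|].
    injection Hst as -> Hps. simpl in Hwf. destruct Hwf as [Hl _].
    rewrite <- Hps, length_map in Lts. lia. }
  pose proof (HM _ (ex_intro _ (App g ts) (conj Hnot eq_refl)) x Hx) as E.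
  simpl fst in E; simpl snd in E.
  cbn [star bullet teval] in E.
  assert (Fts : firstn (ar g) (map (bullet ar) ts) = map (FVar sym) (seq 0 (ar g))).
  { unfold ts. rewrite map_app, firstn_app, map_map, length_map, length_seq, Nat.sub_diag.
    simpl. rewrite app_nil_r. apply firstn_all2. rewrite length_map, length_seq; lia. }
  rewrite Lts, Fts in E. replace (ar g - K) with 0 in E by lia. cbn [seq map] in E.
  rewrite app_nil_r, !map_map in E.
  unfold ts in E. rewrite map_app, map_map, map_repeat in E.
  cbn [teval star] in E.
  etransitivity; [|etransitivity; [exact E|]].
  - apply op_irr. symmetry. apply upd_self.
  - apply op_irr. apply upd_zz. lia.
Qed.

Lemma H_dim : H_closed (rho_dim ar).
Proof.
  intros A B f HA [[Hf Hth] [surj lift]] g t t' Ht Ht' [n Hn] Hlt.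
  destruct (lift t Ht) as [s [Hs Es]].
  set (h := fun y => proj1_sig (constructive_indefinite_description _ (surj y))).
  assert (Hh : forall y, f (h y) = y) by
    (intro y; unfold h; exact (proj2_sig (constructive_indefinite_description _ (surj y)))).
  set (s' := fun i => if (ar g <=? i) && (i <? n) then h (t' i) else s i).
  assert (Hss : eqN s' s).
  { exists n; intros i Hi; unfold s'. replace (i <? n) with false by (symmetry; apply Nat.ltb_ge; lia).
    rewrite andb_false_r; reflexivity. }
  assert (Hs' : tr A s') by (apply (proj2 (tr_trace A)) with (s := s); auto).
  assert (Es' : (fun i => f (s' i)) = t').
  { apply functional_extensionality; intro i; unfold s'.
    destruct (ar g <=? i) eqn:E1; destruct (i <? n) eqn:E2; simpl; try apply Hh;
      (transitivity (t i); [rewrite <- Es; reflexivity|]).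
    - apply Nat.ltb_ge in E2; apply Hn; lia.
    - apply Nat.leb_gt in E1; apply Hlt; lia.
    - apply Nat.leb_gt in E1; apply Hlt; lia. }
  transitivity (op B g (fun i => f (s i)) (Hf s Hs)); [apply op_irr; auto|].
  rewrite <- Hth.
  transitivity (f (op A g s' Hs')).
  - f_equal. apply HA; [apply eqN_sym; auto|].
    intros i Hi; unfold s'. replace (ar g <=? i) with false by (symmetry; apply Nat.leb_gt; lia).
    reflexivity.
  - rewrite Hth. apply op_irr; auto.
Qed.

Lemma S_dim : S_closed (rho_dim ar).
Proof.
  intros A P b btr bsub bop HA g s u Hs Hu [n Hn] Hlt.
  apply sig_ext; simpl. apply HA.
  - exists n; intros i Hi; rewrite Hn; auto.
  - intros i Hi; rewrite Hlt; auto.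
Qed.

Lemma P_dim : P_closed (rho_dim ar).
Proof.
  intros J A HA g s u Hs Hu [n Hn] Hlt. simpl.
  apply functional_extensionality_dep; intro j. apply HA.
  - exists n; intros i Hi; rewrite Hn; auto.
  - intros i Hi; rewrite Hlt; auto.
Qed.

Lemma Et_dim : forall A : talg sym,
  (forall s (H : tr A s), rho_dim ar (Abar A s H)) -> rho_dim ar A.
Proof.
  intros A HA. apply dim_of_z. intros g x Hx M K Hz HK.
  set (c := fun i => if (ar g <=? i) && (i <? K) then M else i).
  set (r1 := fun i => exist (Abar_P A x Hx) (x i) (ex_intro _ (Var sym i) eq_refl)).
  set (r2 := fun i => exist (Abar_P A x Hx) (x (c i)) (ex_intro _ (Var sym (c i)) eq_refl)).
  assert (Hr1 : tr (Abar A x Hx) r1) by (exists 0; reflexivity).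
  assert (Hc : forall i, K <= i -> c i = i).
  { intros i Hi; unfold c. replace (i <? K) with false by (symmetry; apply Nat.ltb_ge; lia).
    rewrite andb_false_r; reflexivity. }
  assert (Hr2 : tr (Abar A x Hx) r2).
  { exists K; intros i Hi; simpl. rewrite Hc; auto. }
  assert (E : op (Abar A x Hx) g r1 Hr1 = op (Abar A x Hx) g r2 Hr2).
  { apply HA.
    - exists K; intros i Hi. apply sig_ext; simpl. rewrite Hc; auto.
    - intros i Hi. apply sig_ext; simpl. unfold c.
      replace (ar g <=? i) with false by (symmetry; apply Nat.leb_gt; lia). reflexivity. }
  apply (f_equal (@proj1_sig _ _)) in E. simpl in E.
  etransitivity; [|etransitivity; [exact E|]]; apply op_irr; try reflexivity.
  apply functional_extensionality; intro i; simpl; unfold c, zz.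
  destruct ((ar g <=? i) && (i <? K)); reflexivity.
Qed.

End Main.

Theorem mainTheorem12 (sym : Type) (ar : sym -> nat) :
  (forall A : talg sym, rho_dim ar A <-> Mod (Str ar) A) /\
  Et_variety (rho_dim ar).
Proof.
  split.
  - intro A; split.
    + intros HA p [t [_ ->]] x H. simpl. apply star_bullet_eval; auto.
    + intro HM. apply dim_of_z, mod_z; auto.
  - split; [split; [apply H_dim|split; [apply S_dim|apply P_dim]]|apply Et_dim].
Qed.
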